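(* Let $(A,\mathcal N,\mathcal P,\lambda)$ be a game and $(\sigma,\phi)$ a uniform strategy on it such that uniformity is local: for all $x\in\mathrm{Conf}(\sigma)$ and $\alpha\in\mathcal N$, if $\alpha$ fixes $p_\sigma(x)$ then $\phi_\alpha$ fixes $x$. Then $(\sigma,\mathcal S_\phi(\sigma))$, with projection $p_\sigma$, is a $\sim$-strategy on the thin concurrent game $(A,\mathcal S,\mathcal S_+,\mathcal S_-)$, where $\mathcal S_-=\mathcal S_{\mathcal N}(A)$, $\mathcal S_+=\mathcal S_{\mathcal P}(A)$ and $\mathcal S$ is the closure of $\mathcal S_-\cup\mathcal S_+$ under composition.
   Context: Event structure: a set with a partial order $\leq$ with finitely many elements below each element, an irreflexive symmetric hereditary conflict $\#$ (if $a\leq a'$, $a\#b$ then $a'\#b$), and polarity into $\{-,+\}$. Configurations: finite down-closed conflict-free subsets, $\mathrm{Conf}(\cdot)$. $x\subseteq^+y$ (resp. $\subseteq^-$): $x\subseteq y$ with $y\setminus x$ all positive (resp. negative). Map of event structures: polarity-preserving function mapping configurations to configurations and injective on each configuration. A function $h$ fixes a set $x$ if $h(a)=a$ for all $a\in x$. Automorphism: bijection preserving and reflecting $\leq,\#$, polarity; negative if whenever it fixes a configuration $x$ and $x\subseteq^+y$ it fixes $y$; positive likewise with $\subseteq^-$. Group actions are homomorphisms into automorphism groups. A game $(A,\mathcal N,\mathcal P,\lambda)$: $\mathcal N$ a group acting on $A$ by negative automorphisms, $\mathcal P$ by positive automorphisms, $\lambda:\mathcal N\times\mathcal P\to\mathcal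 P\times\mathcal N$ with (i) $\lambda(e,\beta)=(\beta,e)$, $\lambda(\alpha,e)=(e,\alpha)$; (ii) if $\lambda(\alpha',\beta)=(\beta_1,\alpha_1)$, $\lambda(\alpha,\beta_1)=(\beta_2,\alpha_2)$ then $\lambda(\alpha\alpha',\beta)=(\beta_2,\alpha_2\alpha_1)$; (iii) if $\lambda(\alpha,\beta)=(\beta_1,\alpha_1)$, $\lambda(\alpha_1,\beta')=(\beta_2,\alpha_2)$ then $\lambda(\alpha,\beta\beta')=(\beta_1\beta_2,\alpha_2)$; (iv) if $\lambda(\alpha,\beta)=(\beta',\alpha')$ then $\alpha(\beta(a))=\beta'(\alpha'(a))$ for all $a$. For a group $G$ acting on $A$, $\mathcal S_G(A)$ is the set of bijections $x\cong g(x)$ ($x\in\mathrm{Conf}(A)$, $g\in G$) obtained by restricting $g$ to $x$. Strategy on $A$: event structure $\sigma$ with map $p_\sigma:\sigma\to A$ such that for every $x\in\mathrm{Conf}(\sigma)$: if $p_\sigma(x)\subseteq^-z$ there is a unique $y\in\mathrm{Conf}(\sigma)$ with $x\subseteq y$, $p_\sigma(y)=z$; if $z\subseteq^+p_\sigma(x)$ there is $y\subseteq x$ in $\mathrm{Conf}(\sigma)$ with $p_\sigma(y)=z$. Weak map $\sigma\to\tau$: a map $f$ with $f[x]\in\mathcal P$ ($x\in\mathrm{Conf}(\sigma)$) such that $f[x](p_\tau(f(s)))=p_\sigma(s)$ for $s\in x$. $\alpha\cdot\sigma$ is $\sigma$ with projection $\alpha\circ p_\sigma$. Uniform strategy: strategy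 $\sigma$ with weak maps $\phi_\alpha:\alpha\cdot\sigma\to\sigma$ ($\alpha\in\mathcal N$) such that for all $x$: $\phi_e(x)=x$, $\phi_e[x]=e$; and for all $\alpha,\alpha'$, with $y=\phi_\alpha(x)$, $(\gamma,\beta)=\lambda(\alpha',\phi_\alpha[x])$: $\phi_{\alpha'\alpha}(x)=\phi_\beta(y)$ and $\phi_{\alpha'\alpha}[x]=\gamma\,\phi_\beta[y]$. $\mathcal S_\phi(\sigma)$ is the set of bijections $x\cong\phi_\alpha(x)$ obtained by restricting $\phi_\alpha$ to $x\in\mathrm{Conf}(\sigma)$, for $\alpha\in\mathcal N$. For bijections $\theta:x\cong y$, $\theta':x'\cong y'$ between configurations: $\theta\subseteq\theta'$ if $x\subseteq x'$ and $\theta'|_x=\theta$; $\theta\subseteq^{\pm}\theta'$ if moreover $x\subseteq^{\pm}x'$. An isomorphism family on $E$: a set of polarity-preserving bijections between configurations, containing identities, closed under composition and inverse, closed under restriction to subconfigurations, and such that each $\theta:x\cong y$ extends to some $\theta'\supseteq\theta$ in the family on any configuration $x'\supseteq x$. An event structure with symmetry is a pair $(E,\mathcal S_E)$; a map of such $(E,\mathcal S_E)\to(F,\mathcal S_F)$ is a map of event structures $f$ such that for every $\theta:x\cong y$ in $\mathcal S_E$ the bijection $f(a)\mapsto f(\theta(a))$, $f(x)\cong f(y)$, lies in $\mathcal S_F$. A thin concurrent game is an event structure with isomorphism families $\mathcal S,\mathcal S_+,\mathcal S_-$, $\mathcal S_\pm\subseteq\mathcal S$, such that $\mathcal S_+\cap\mathcal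 S_-$ consists of identities, $\theta\in\mathcal S_+$ and $\theta\subseteq^+\theta'\in\mathcal S$ imply $\theta'\in\mathcal S_+$, and $\theta\in\mathcal S_-$ and $\theta\subseteq^-\theta'\in\mathcal S$ imply $\theta'\in\mathcal S_-$. A $\sim$-strategy on a thin concurrent game $(A,\mathcal S,\mathcal S_+,\mathcal S_-)$ is an event structure with symmetry $(\sigma,\mathcal S_\sigma)$ with a map of event structures with symmetry $p:(\sigma,\mathcal S_\sigma)\to(A,\mathcal S)$ that is a strategy on $A$ and satisfies: (thinness) if $x\in\mathrm{Conf}(\sigma)$ and $\mathrm{id}_x\subseteq^+\theta\in\mathcal S_\sigma$ then $\theta=\mathrm{id}_{x'}$ for some $x'$; ($\sim$-receptivity) if $x\subseteq^-y$ and $x\subseteq^-z$ in $\mathrm{Conf}(\sigma)$ and there is $\theta:p(y)\cong p(z)$ in $\mathcal S$ with $\mathrm{id}_{p(x)}\subseteq\theta$, then there is $\chi:y\cong z$ in $\mathcal S_\sigma$ with $\mathrm{id}_x\subseteq\chi$ and $p\chi=\theta$, where $p\chi$ denotes the bijection $p(s)\mapsto p(\chi(s))$. *)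

(* Defs.v *)
From Stdlib Require Import List.
Unset Implicit Arguments.

Definition set_eq {E} (x y : E -> Prop) := forall a, x a <-> y a.
Definition subset {E} (x y : E -> Prop) := forall a, x a -> y a.
Definition image {E F} (f : E -> F) (x : E -> Prop) : F -> Prop :=
  fun b => exists a, x a /\ b = f a.

Definition pbij (E : Type) := E -> E -> Prop.
Definition dom {E} (t : pbij E) : E -> Prop := fun a => exists b, t a b.
Definition cod {E} (t : pbij E) : E -> Prop := fun b => exists a, t a b.
Definition rel_eq {E} (t u : pbij E) := forall a b, t a b <-> u a b.
Definition id_on {E} (x : E -> Prop) : pbij E := fun a b => x a /\ b = a.
Definition restr {E} (g : E -> E) (x : E -> Prop) : pbij E :=
  fun a b => x a /\ b = g a.
Definition bcomp {E} (t2 t1 : pbij E) : pbij E :=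
  fun a c => exists b, t1 a b /\ t2 b c.
Definition binv {E} (t : pbij E) : pbij E := fun a b => t b a.
Definition brestrict {E} (t : pbij E) (x : E -> Prop) : pbij E :=
  fun a b => x a /\ t a b.
Definition push {E F} (f : E -> F) (t : pbij E) : pbij F :=
  fun c d => exists a b, t a b /\ c = f a /\ d = f b.
Definition is_bij {E} (t : pbij E) (x y : E -> Prop) :=
  (forall a b b', t a b -> t a b' -> b = b') /\
  (forall a a' b, t a b -> t a' b -> a = a') /\
  set_eq (dom t) x /\ set_eq (cod t) y.

Record ES (E : Type) := mkES {
  leq : E -> E -> Prop;
  cfl : E -> E -> Prop;
  pol : E -> bool  (* true = positive (+), false = negative (-) *) }.
Arguments leq {E} _ _ _.
Arguments cfl {E} _ _ _.
Arguments pol {E} _ _.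

Definition is_ES {E} (A : ES E) : Prop :=
  (forall a, leq A a a) /\
  (forall a b, leq A a b -> leq A b a -> a = b) /\
  (forall a b c, leq A a b -> leq A b c -> leq A a c) /\
  (forall e, exists l : list E, forall e', leq A e' e <-> In e' l) /\
  (forall a, ~ cfl A a a) /\
  (forall a b, cfl A a b -> cfl A b a) /\
  (forall a a' b, leq A a a' -> cfl A a b -> cfl A a' b).

Definition config {E} (A : ES E) (x : E -> Prop) : Prop :=
  (exists l : list E, forall e, x e <-> In e l) /\
  (forall a b, leq A a b -> x b -> x a) /\
  (forall a b, x a -> x b -> ~ cfl A a b).

Definition subpos {E} (A : ES E) (x y : E -> Prop) :=
  subset x y /\ forall a, y a -> ~ x a -> pol A a = true.
Definition subneg {E} (A : ES E) (x y : E -> Prop) :=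
  subset x y /\ forall a, y a -> ~ x a -> pol A a = false.

Definition es_map {E F} (A : ES E) (B : ES F) (f : E -> F) : Prop :=
  (forall a, pol B (f a) = pol A a) /\
  (forall x, config A x -> config B (image f x)) /\
  (forall x, config A x -> forall a b, x a -> x b -> f a = f b -> a = b).

Definition fixes {E} (h : E -> E) (x : E -> Prop) := forall a, x a -> h a = a.

Definition automorphism {E} (A : ES E) (h : E -> E) : Prop :=
  (exists h', (forall a, h' (h a) = a) /\ (forall a, h (h' a) = a)) /\
  (forall a b, leq A (h a) (h b) <-> leq A a b) /\
  (forall a b, cfl A (h a) (h b) <-> cfl A a b) /\
  (forall a, pol A (h a) = pol A a).

Definition neg_automorphism {E} (A : ES E) (h : E -> E) : Prop :=
  automorphism A h /\
  forall x y, config A x -> config A y -> fixes h x -> subpos A x y -> fixes h y.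
Definition pos_automorphism {E} (A : ES E) (h : E -> E) : Prop :=
  automorphism A h /\
  forall x y, config A x -> config A y -> fixes h x -> subneg A x y -> fixes h y.

Record Group := mkGroup {
  gcar :> Type;
  gmul : gcar -> gcar -> gcar;
  gone : gcar;
  ginv : gcar -> gcar;
  gmulA : forall a b c, gmul a (gmul b c) = gmul (gmul a b) c;
  gmul1l : forall a, gmul gone a = a;
  gmul1r : forall a, gmul a gone = a;
  gmulVl : forall a, gmul (ginv a) a = gone;
  gmulVr : forall a, gmul a (ginv a) = gone }.
Arguments gmul G _ _ : rename.

Definition is_action {E} (A : ES E) (G : Group) (act : G -> E -> E) : Prop :=
  (forall a, act (gone G) a = a) /\
  (forall g h a, act (gmul G g h) a = act g (act h a)) /\
  (forall g, automorphism A (act g)).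

Definition is_game {E} (A : ES E) (N P : Group)
  (actN : N -> E -> E) (actP : P -> E -> E) (lam : N -> P -> P * N) : Prop :=
  is_ES A /\
  is_action A N actN /\ (forall al, neg_automorphism A (actN al)) /\
  is_action A P actP /\ (forall be, pos_automorphism A (actP be)) /\
  (* (i) *)
  (forall be, lam (gone N) be = (be, gone N)) /\
  (forall al, lam al (gone P) = (gone P, al)) /\
  (* (ii) *)
  (forall al al' be be1 al1 be2 al2,
     lam al' be = (be1, al1) -> lam al be1 = (be2, al2) ->
     lam (gmul N al al') be = (be2, gmul N al2 al1)) /\
  (* (iii) *)
  (forall al be be' be1 al1 be2 al2,
     lam al be = (be1, al1) -> lam al1 be' = (be2, al2) ->
     lam al (gmul P be be') = (gmul P be1 be2, al2)) /\
  (* (iv) *)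
  (forall al be be' al', lam al be = (be', al') ->
     forall a, actN al (actP be a) = actP be' (actN al' a)).

Definition S_act {E} (A : ES E) (G : Group) (act : G -> E -> E) : pbij E -> Prop :=
  fun t => exists g x, config A x /\ rel_eq t (restr (act g) x).

Inductive comp_closure {E} (S1 S2 : pbij E -> Prop) : pbij E -> Prop :=
| cc_l : forall t u, S1 u -> rel_eq t u -> comp_closure S1 S2 t
| cc_r : forall t u, S2 u -> rel_eq t u -> comp_closure S1 S2 t
| cc_comp : forall t t1 t2, comp_closure S1 S2 t1 -> comp_closure S1 S2 t2 ->
    set_eq (cod t1) (dom t2) -> rel_eq t (bcomp t2 t1) -> comp_closure S1 S2 t.

Definition is_strategy {E S} (A : ES E) (sg : ES S) (p : S -> E) : Prop :=
  is_ES sg /\ es_map sg A p /\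
  forall x, config sg x ->
    (forall z, config A z -> subneg A (image p x) z ->
       exists y, config sg y /\ subset x y /\ set_eq (image p y) z /\
         forall y', config sg y' -> subset x y' -> set_eq (image p y') z ->
           set_eq y' y) /\
    (forall z, config A z -> subpos A z (image p x) ->
       exists y, config sg y /\ subset y x /\ set_eq (image p y) z).

(* weak map alpha.sigma -> sigma given by (f, f[-]) *)
Definition weak_map_act {E S} (A : ES E) (sg : ES S) (p : S -> E) (P : Group)
  (actP : P -> E -> E) (al_act : E -> E) (f : S -> S) (fb : (S -> Prop) -> P) : Prop :=
  es_map sg sg f /\
  forall x, config sg x -> forall s, x s -> actP (fb x) (p (f s)) = al_act (p s).

Definition is_uniform {E S} (A : ES E) (N P : Group)
  (actN : N -> E -> E) (actP : P -> E -> E) (lam : N -> P -> P * N)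
  (sg : ES S) (p : S -> E)
  (phi : N -> S -> S) (phib : N -> (S -> Prop) -> P) : Prop :=
  is_strategy A sg p /\
  (forall al, weak_map_act A sg p P actP (actN al) (phi al) (phib al)) /\
  (forall x, config sg x ->
     set_eq (image (phi (gone N)) x) x /\ phib (gone N) x = gone P) /\
  (forall al al' x, config sg x ->
     let y := image (phi al) x in
     let ga := fst (lam al' (phib al x)) in
     let be := snd (lam al' (phib al x)) in
     set_eq (image (phi (gmul N al' al)) x) (image (phi be) y) /\
     phib (gmul N al' al) x = gmul P ga (phib be y)).

Definition S_phi {S} (sg : ES S) (N : Group) (phi : N -> S -> S) : pbij S -> Prop :=
  fun t => exists al x, config sg x /\ rel_eq t (restr (phi al) x).

Definition sub_bij {E} (t t' : pbij E) :=
  subset (dom t) (dom t') /\ forall a b, dom t a -> (t' a b <-> t a b).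
Definition sub_bij_pos {E} (A : ES E) (t t' : pbij E) :=
  sub_bij t t' /\ subpos A (dom t) (dom t').
Definition sub_bij_neg {E} (A : ES E) (t t' : pbij E) :=
  sub_bij t t' /\ subneg A (dom t) (dom t').

Definition iso_family {E} (A : ES E) (F : pbij E -> Prop) : Prop :=
  (forall t, F t -> exists x y, config A x /\ config A y /\ is_bij t x y /\
       forall a b, t a b -> pol A a = pol A b) /\
  (forall x, config A x -> F (id_on x)) /\
  (forall t1 t2, F t1 -> F t2 -> set_eq (cod t1) (dom t2) -> F (bcomp t2 t1)) /\
  (forall t, F t -> F (binv t)) /\
  (forall t x, F t -> config A x -> subset x (dom t) -> F (brestrict t x)) /\
  (forall t x', F t -> config A x' -> subset (dom t) x' ->
     exists t', F t' /\ sub_bij t t' /\ set_eq (dom t') x').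

Definition es_sym_map {E F} (A : ES E) (SA : pbij E -> Prop)
  (B : ES F) (SB : pbij F -> Prop) (f : E -> F) : Prop :=
  es_map A B f /\ forall t, SA t -> SB (push f t).

Definition thin_game {E} (A : ES E) (Sy Sp Sm : pbij E -> Prop) : Prop :=
  is_ES A /\ iso_family A Sy /\ iso_family A Sp /\ iso_family A Sm /\
  (forall t, Sp t -> Sy t) /\ (forall t, Sm t -> Sy t) /\
  (forall t, Sp t -> Sm t -> exists x, rel_eq t (id_on x)) /\
  (forall t t', Sp t -> sub_bij_pos A t t' -> Sy t' -> Sp t') /\
  (forall t t', Sm t -> sub_bij_neg A t t' -> Sy t' -> Sm t').

Definition sim_strategy {E S} (A : ES E) (Sy : pbij E -> Prop)
  (sg : ES S) (Ssg : pbij S -> Prop) (p : S -> E) : Prop :=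
  is_ES sg /\ iso_family sg Ssg /\
  es_sym_map sg Ssg A Sy p /\
  is_strategy A sg p /\
  (* thinness *)
  (forall x t, config sg x -> sub_bij_pos sg (id_on x) t -> Ssg t ->
     exists x', rel_eq t (id_on x')) /\
  (* ~-receptivity *)
  (forall x y z t, config sg x -> config sg y -> config sg z ->
     subneg sg x y -> subneg sg x z ->
     Sy t -> set_eq (dom t) (image p y) -> set_eq (cod t) (image p z) ->
     sub_bij (id_on (image p x)) t ->
     exists c, Ssg c /\ set_eq (dom c) y /\ set_eq (cod c) z /\
       sub_bij (id_on x) c /\ rel_eq (push p c) t).

(* Main.v *)
Require Import Defs.
From Stdlib Require Import List Classical Lia.

Lemma list_filter_ex {E} (l: list E) (P: E -> Prop):
  exists l', forall e, In e l' <-> In e l /\ P e.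
Proof.
  induction l as [|a l IH].
  - exists nil; simpl; tauto.
  - destruct IH as [l' H]. destruct (classic (P a)).
    + exists (a::l'). intro e; simpl; rewrite H. split.
      * intros [<-|[? ?]]; auto.
      * intros [[<-|?] ?]; auto.
    + exists l'. intro e; simpl; rewrite H. split.
      * intros [? ?]; auto.
      * intros [[<-|?] ?]; auto; contradiction.
Qed.

Lemma list_remove {E} (l : list E) a: In a l ->
  exists l', length l' < length l /\ forall e, In e l -> e <> a -> In e l'.
Proof.
  induction l as [|c l IH]; simpl; [tauto|].
  intros Ha. destruct (classic (c = a)) as [<-|Hne].
  - exists l. split; [lia|]. intros e [<-|?] ?; [congruence|auto].
  - destruct Ha as [<-|Ha]; [congruence|].
    destruct (IH Ha) as [l' [Hl Hin]]. exists (c::l'). simpl. split; [lia|].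
    intros e [<-|?] ?; auto.
Qed.

Lemma es_ind {E} (A: ES E) (HA: is_ES A) (Q: E -> Prop):
  (forall a, (forall b, leq A b a -> b <> a -> Q b) -> Q a) -> forall a, Q a.
Proof.
  destruct HA as (Hrefl & Hanti & Htrans & Hfin & Hirr & Hsym & Hher).
  intros Hrec.
  assert (K: forall n a, (exists l, length l <= n /\ forall e, leq A e a -> In e l) -> Q a).
  { induction n as [|n IH]; intros a [l [Hl Hin]].
    - destruct l; simpl in *; [|lia]. exfalso; exact (Hin a (Hrefl a)).
    - apply Hrec. intros b Hb Hne.
      destruct (list_remove l a (Hin a (Hrefl a))) as [l' [Hl' Hin']].
      apply IH. exists l'. split; [lia|].
      intros e He. apply Hin'. apply Hin. eauto.
      intros ->. apply Hne. apply Hanti; auto. }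
  intros a. destruct (Hfin a) as [l Hl]. apply (K (length l)). exists l. split; auto.
  intros e He; apply Hl; auto.
Qed.

Lemma down_config {E} (A: ES E) a: is_ES A -> config A (fun b => leq A b a).
Proof.
  intros (Hrefl & Hanti & Htrans & Hfin & Hirr & Hsym & Hher).
  split; [|split].
  - destruct (Hfin a) as [l Hl]. exists l. intro e. apply Hl.
  - intros; eauto.
  - intros b c Hb Hc Hbc. apply (Hirr a). apply (Hher c a a Hc). apply Hsym. eauto.
Qed.

Lemma sdown_config {E} (A: ES E) a: is_ES A -> config A (fun b => leq A b a /\ b <> a).
Proof.
  intros HA. pose proof HA as (Hrefl & Hanti & Htrans & Hfin & Hirr & Hsym & Hher).
  destruct (down_config A a HA) as [[l Hl] [Hdc Hcf]].
  split; [|split].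
  - destruct (list_filter_ex l (fun b => b <> a)) as [l' Hl']. exists l'.
    intro e. rewrite Hl', <- Hl. tauto.
  - intros b c Hbc [Hc Hne]. split; eauto. intros ->. apply Hne. apply Hanti; auto.
  - intros b c [Hb _] [Hc _]. apply Hcf; auto.
Qed.

Lemma agree {E} (A: ES E) f g: is_ES A -> neg_automorphism A f -> pos_automorphism A g ->
  forall x, config A x -> (forall a, x a -> f a = g a) -> fixes f x.
Proof.
  intros HA Hf Hg x Hx Hfg. pose proof HA as (Hrefl & Hanti & Htrans & Hfin & Hirr & Hsym & Hher).
  intro a. pattern a; apply (es_ind A HA). clear a. intros a IH Hxa.
  assert (Hdc: forall b, leq A b a -> x b) by (intros; eapply (proj1 (proj2 Hx)); eauto).
  assert (Hsf: fixes f (fun b => leq A b a /\ b <> a)).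
  { intros b [Hb Hne]. apply IH; auto. }
  assert (Hsg: fixes g (fun b => leq A b a /\ b <> a)).
  { intros b Hb. rewrite <- Hfg. apply Hsf; auto. apply Hdc, Hb. }
  assert (Hsub: subset (fun b => leq A b a /\ b <> a) (fun b => leq A b a)) by (intros b [? ?]; auto).
  assert (Heq: forall b, leq A b a -> ~ (leq A b a /\ b <> a) -> b = a).
  { intros b Hb Hn. apply NNPP. intro. apply Hn; auto. }
  destruct (pol A a) eqn:Hp.
  - apply (proj2 Hf _ _ (sdown_config A a HA) (down_config A a HA) Hsf); auto.
    split; auto. intros b Hb Hn. rewrite (Heq b Hb Hn). auto.
  - rewrite Hfg; auto.
    apply (proj2 Hg _ _ (sdown_config A a HA) (down_config A a HA) Hsg); auto.
    split; auto. intros b Hb Hn. rewrite (Heq b Hb Hn). auto.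
Qed.

Lemma act_inv_l {E} (A: ES E) G act: is_action A G act -> forall g a, act (ginv G g) (act g a) = a.
Proof. intros [H1 [H2 _]] g a. rewrite <- H2, gmulVl. apply H1. Qed.
Lemma act_inv_r {E} (A: ES E) G act: is_action A G act -> forall g a, act g (act (ginv G g) a) = a.
Proof. intros [H1 [H2 _]] g a. rewrite <- H2, gmulVr. apply H1. Qed.

Lemma aut_image_config {E} (A: ES E) h x: automorphism A h -> config A x -> config A (image h x).
Proof.
  intros [[h' [Hl Hr]] [Hle [Hcf Hp]]] [[l Hl0] [Hdc Hcfx]]. split; [|split].
  - exists (map h l). intro e. rewrite in_map_iff. unfold image. split.
    + intros [a [Ha ->]]. exists a; split; auto. apply Hl0; auto.
    + intros [a [<- Ha]]. exists a; split; auto. apply Hl0; auto.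
  - intros a b Hab [c [Hc ->]]. exists (h' a). split; [|auto].
    apply (Hdc _ c); auto. apply Hle. rewrite Hr. auto.
  - intros a b [c [Hc ->]] [d [Hd ->]] H. apply (Hcfx c d); auto. apply Hcf; auto.
Qed.

Lemma config_ext {E} (A: ES E) x y: config A x -> set_eq x y -> config A y.
Proof.
  intros [[l Hl] [Hdc Hcf]] Hxy. split; [|split].
  - exists l. intro e. rewrite <- (Hxy e). auto.
  - intros a b Hab Hb. apply Hxy. apply Hxy in Hb. eauto.
  - intros a b Ha Hb. apply Hxy in Ha. apply Hxy in Hb. auto.
Qed.

Lemma dom_restr {E} (h: E -> E) x: set_eq (dom (restr h x)) x.
Proof. intro a; unfold dom, restr; split; [intros [b [? ?]]; auto | intros; exists (h a); auto]. Qed.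
Lemma cod_restr {E} (h: E -> E) x: set_eq (cod (restr h x)) (image h x).
Proof. intro b; unfold cod, restr, image; split; intros [a [? ?]]; exists a; auto. Qed.
Lemma dom_rel {E} (t u: pbij E): rel_eq t u -> set_eq (dom t) (dom u).
Proof. intros H a; unfold dom; split; intros [b Hb]; exists b; apply H; auto. Qed.
Lemma cod_rel {E} (t u: pbij E): rel_eq t u -> set_eq (cod t) (cod u).
Proof. intros H b; unfold cod; split; intros [a Ha]; exists a; apply H; auto. Qed.
Lemma dom_of {E} (t: pbij E) h x: rel_eq t (restr h x) -> set_eq (dom t) x.
Proof. intros H a. rewrite (dom_rel _ _ H a). apply dom_restr. Qed.
Lemma cod_of {E} (t: pbij E) h x: rel_eq t (restr h x) -> set_eq (cod t) (image h x).
Proof. intros H a. rewrite (cod_rel _ _ H a). apply cod_restr. Qed.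

Definition Fam {E} (A: ES E) (H: (E->E) -> Prop) (t: pbij E) :=
  exists h x, H h /\ config A x /\ rel_eq t (restr h x).

Lemma fam_iso {E} (A: ES E) H: (forall h, H h -> automorphism A h) ->
  (exists h, H h /\ forall a, h a = a) ->
  (forall h1 h2, H h1 -> H h2 -> exists h, H h /\ forall a, h a = h2 (h1 a)) ->
  (forall h, H h -> exists h', H h' /\ forall a, h' (h a) = a) ->
  iso_family A (Fam A H).
Proof.
  intros HA Hid Hcomp Hinv. split; [|split; [|split; [|split; [|split]]]].
  - intros t [h [x [Hh [Hx Ht]]]]. exists x, (image h x). split; auto.
    split; [apply aut_image_config; auto|]. split.
    + split; [|split; [|split]].
      * intros a b b' H1 H2. apply Ht in H1. apply Ht in H2. destruct H1, H2; congruence.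
      * intros a a' b H1 H2. apply Ht in H1. apply Ht in H2.
        destruct H1 as [_ E1], H2 as [_ E2].
        destruct (proj1 (HA h Hh)) as [h' [Hl _]]. rewrite <- (Hl a), <- (Hl a'); congruence.
      * apply dom_of with h; auto.
      * apply cod_of; auto.
    + intros a b Hab. apply Ht in Hab. destruct Hab as [_ ->].
      symmetry. apply (proj2 (proj2 (proj2 (HA h Hh)))).
  - intros x Hx. destruct Hid as [h [Hh Hi]]. exists h, x. split; [|split]; auto.
    intros a b; unfold id_on, restr; rewrite Hi; tauto.
  - intros t1 t2 [h1 [x1 [Hh1 [Hx1 Ht1]]]] [h2 [x2 [Hh2 [Hx2 Ht2]]]] Hcd.
    destruct (Hcomp h1 h2 Hh1 Hh2) as [h [Hh Heq]]. exists h, x1. split; [|split]; auto.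
    intros a c; unfold bcomp, restr; split.
    + intros [b [Hb1 Hb2]]. apply Ht1 in Hb1. apply Ht2 in Hb2.
      destruct Hb1 as [? ->], Hb2 as [? ->]. split; auto.
    + intros [Ha ->]. exists (h1 a). split; [apply Ht1; split; auto|].
      apply Ht2. split; [|auto].
      assert (Hc: cod t1 (h1 a)) by (exists a; apply Ht1; split; auto).
      apply Hcd in Hc. apply (dom_of _ _ _ Ht2) in Hc. auto.
  - intros t [h [x [Hh [Hx Ht]]]]. destruct (Hinv h Hh) as [h' [Hh' Hi]].
    exists h', (image h x). split; [|split]; auto. apply aut_image_config; auto.
    intros a b; unfold binv, restr, image. rewrite (Ht b a). unfold restr. split.
    + intros [Hb ->]. split; [exists b; auto| auto].
    + intros [[c [Hc ->]] ->]. rewrite Hi. auto.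
  - intros t x0 [h [x [Hh [Hx Ht]]]] Hx0 Hsub. exists h, x0. split; [|split]; auto.
    intros a b; unfold brestrict, restr. rewrite (Ht a b). unfold restr. split; [tauto|].
    intros [Ha ->]. split; auto. split; auto. apply (dom_of _ _ _ Ht). auto.
  - intros t x' [h [x [Hh [Hx Ht]]]] Hx' Hsub. exists (restr h x'). split; [|split].
    + exists h, x'. split; [|split]; auto. intros a b; tauto.
    + split.
      * intros a Ha. apply (dom_restr h x'). auto.
      * intros a b Ha. pose proof (Hsub a Ha) as Ha'. apply (dom_of _ _ _ Ht) in Ha.
        rewrite (Ht a b). unfold restr. tauto.
    + apply dom_restr.
Qed.

From Stdlib Require Import FunctionalExtensionality PropExtensionality.

Lemma rel_trans {E} (t u v: pbij E): rel_eq t u -> rel_eq u v -> rel_eq t v.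
Proof. intros H1 H2 a b. rewrite (H1 a b). apply H2. Qed.
Lemma rel_sym {E} (t u: pbij E): rel_eq t u -> rel_eq u t.
Proof. intros H1 a b. rewrite (H1 a b). tauto. Qed.
Lemma rel_refl {E} (t: pbij E): rel_eq t t.
Proof. intros a b; tauto. Qed.
Lemma restr_ext {E} (h h': E -> E) x: (forall a, h a = h' a) -> rel_eq (restr h x) (restr h' x).
Proof. intros H a b; unfold restr. rewrite H. tauto. Qed.

Lemma restr_ext_on {E} (h h': E -> E) x: (forall a, x a -> h a = h' a) -> rel_eq (restr h x) (restr h' x).
Proof. intros H a b; unfold restr. split; intros [Ha ->]; rewrite H; auto. Qed.

Lemma cc_ext {E} (S1 S2: pbij E -> Prop) t u: comp_closure S1 S2 u -> rel_eq t u -> comp_closure S1 S2 t.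
Proof.
  intros H Htu. destruct H as [u v Hv Huv|u v Hv Huv|u t1 t2 H1 H2 Hcd Hu].
  - apply cc_l with v; [exact Hv| eapply rel_trans; eauto].
  - apply cc_r with v; [exact Hv| eapply rel_trans; eauto].
  - apply cc_comp with t1 t2; auto. eapply rel_trans; eauto.
Qed.

Lemma aut_comp {E} (A: ES E) f g: automorphism A f -> automorphism A g -> automorphism A (fun a => f (g a)).
Proof.
  intros [[f' [Hf1 Hf2]] [Hfl [Hfc Hfp]]] [[g' [Hg1 Hg2]] [Hgl [Hgc Hgp]]].
  split; [|split; [|split]].
  - exists (fun a => g' (f' a)). split; intros a; [rewrite Hf1; auto| rewrite Hg2; auto].
  - intros a b. rewrite Hfl. auto.
  - intros a b. rewrite Hfc. auto.
  - intros a. rewrite Hfp. auto.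
Qed.

Lemma fam_eq_act {E} (A: ES E) G act:
  S_act A G act = Fam A (fun h => exists g, h = act g).
Proof.
  apply functional_extensionality; intro t. apply propositional_extensionality.
  unfold S_act, Fam. split.
  - intros [g [x [Hx Ht]]]. exists (act g), x. split; eauto.
  - intros [h [x [[g ->] [Hx Ht]]]]. exists g, x. auto.
Qed.

Lemma iso_act {E} (A: ES E) G act: is_action A G act -> iso_family A (S_act A G act).
Proof.
  intros Hact. pose proof Hact as [H1 [H2 H3]]. rewrite fam_eq_act. apply fam_iso.
  - intros h [g ->]. auto.
  - exists (act (gone G)). split; eauto.
  - intros h1 h2 [g1 ->] [g2 ->]. exists (act (gmul G g2 g1)). split; eauto.
  - intros h [g ->]. exists (act (ginv G g)). split; eauto. apply (act_inv_l A); auto.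
Qed.

Section Game.
Context {E : Type} (A : ES E) (N P : Group)
  (actN : N -> E -> E) (actP : P -> E -> E) (lam : N -> P -> P * N).
Hypothesis Hg : is_game A N P actN actP lam.

Let Sm := S_act A N actN.
Let Sp := S_act A P actP.
Let Sy := comp_closure Sm Sp.
Definition FF be al := fun a => actP be (actN al a).

Lemma g_ES : is_ES A. Proof. apply Hg. Qed.
Lemma g_actN : is_action A N actN. Proof. apply Hg. Qed.
Lemma g_actP : is_action A P actP. Proof. apply Hg. Qed.
Lemma g_neg al : neg_automorphism A (actN al). Proof. apply Hg. Qed.
Lemma g_pos be : pos_automorphism A (actP be). Proof. apply Hg. Qed.
Lemma g_iv : forall al be be' al', lam al be = (be', al') ->
     forall a, actN al (actP be a) = actP be' (actN al' a).
Proof. apply Hg. Qed.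
Lemma g_iii : forall al be be' be1 al1 be2 al2,
     lam al be = (be1, al1) -> lam al1 be' = (be2, al2) ->
     lam al (gmul P be be') = (gmul P be1 be2, al2).
Proof. apply Hg. Qed.
Lemma g_i2 : forall al, lam al (gone P) = (gone P, al).
Proof. apply Hg. Qed.

Lemma N1 a : actN (gone N) a = a. Proof. apply g_actN. Qed.
Lemma P1 a : actP (gone P) a = a. Proof. apply g_actP. Qed.
Lemma NM g h a : actN (gmul N g h) a = actN g (actN h a). Proof. apply g_actN. Qed.
Lemma PM g h a : actP (gmul P g h) a = actP g (actP h a). Proof. apply g_actP. Qed.
Lemma NVl g a : actN (ginv N g) (actN g a) = a. Proof. apply (act_inv_l A), g_actN. Qed.
Lemma NVr g a : actN g (actN (ginv N g) a) = a. Proof. apply (act_inv_r A), g_actN. Qed.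
Lemma PVl g a : actP (ginv P g) (actP g a) = a. Proof. apply (act_inv_l A), g_actP. Qed.
Lemma PVr g a : actP g (actP (ginv P g) a) = a. Proof. apply (act_inv_r A), g_actP. Qed.
Lemma autN al : automorphism A (actN al). Proof. apply g_neg. Qed.
Lemma autP be : automorphism A (actP be). Proof. apply g_pos. Qed.

Lemma FF_comp be1 al1 be2 al2 : exists be al, forall a,
  FF be al a = FF be2 al2 (FF be1 al1 a).
Proof.
  destruct (lam al2 be1) as [b' a'] eqn:Hl.
  exists (gmul P be2 b'), (gmul N a' al1). intro a. unfold FF.
  rewrite PM, NM, (g_iv _ _ _ _ Hl). auto.
Qed.

Lemma sy_nf t : Sy t -> exists be al x, config A x /\ rel_eq t (restr (FF be al) x).
Proof.
  induction 1 as [t u Hu Htu|t u Hu Htu|t t1 t2 H1 IH1 H2 IH2 Hcd Ht].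
  - destruct Hu as [g [x [Hx Hu]]]. exists (gone P), g, x. split; auto.
    eapply rel_trans; [eauto|]. eapply rel_trans; [eauto|]. apply restr_ext.
    intro; unfold FF; rewrite P1; auto.
  - destruct Hu as [g [x [Hx Hu]]]. exists g, (gone N), x. split; auto.
    eapply rel_trans; [eauto|]. eapply rel_trans; [eauto|]. apply restr_ext.
    intro; unfold FF; rewrite N1; auto.
  - destruct IH1 as [be1 [al1 [x1 [Hx1 Ht1]]]].
    destruct IH2 as [be2 [al2 [x2 [Hx2 Ht2]]]].
    destruct (FF_comp be1 al1 be2 al2) as [be [al Hfe]].
    exists be, al, x1. split; auto. eapply rel_trans; [eauto|].
    intros a c; unfold bcomp, restr; split.
    + intros [b [Hb1 Hb2]]. apply Ht1 in Hb1. apply Ht2 in Hb2.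
      destruct Hb1 as [? ->], Hb2 as [? ->]. split; auto.
    + intros [Ha ->]. exists (FF be1 al1 a). split; [apply Ht1; split; auto|].
      apply Ht2. split; [|auto].
      assert (Hc: cod t1 (FF be1 al1 a)) by (exists a; apply Ht1; split; auto).
      apply Hcd in Hc. apply (dom_of _ _ _ Ht2) in Hc. auto.
Qed.

Lemma sy_intro t be al x : config A x -> rel_eq t (restr (FF be al) x) -> Sy t.
Proof.
  intros Hx Ht.
  apply cc_comp with (t1 := restr (actN al) x) (t2 := restr (actP be) (image (actN al) x)).
  - eapply cc_l; [|apply rel_refl]. exists al, x. split; auto. apply rel_refl.
  - eapply cc_r; [|apply rel_refl]. exists be, (image (actN al) x). split; [|apply rel_refl].
    apply aut_image_config; auto. apply autN.
  - intro b. rewrite (cod_restr _ _ b), (dom_restr _ _ b). tauto.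
  - eapply rel_trans; [eauto|]. intros a c; unfold bcomp, restr, image, FF; split.
    + intros [Ha ->]. exists (actN al a). split; auto. split; auto. exists a; auto.
    + intros [b [[Ha ->] [_ ->]]]. auto.
Qed.

Lemma fam_eq_sy : Sy = Fam A (fun h => exists be al, h = FF be al).
Proof.
  apply functional_extensionality; intro t. apply propositional_extensionality.
  split.
  - intros Ht. destruct (sy_nf t Ht) as [be [al [x [Hx Hr]]]].
    exists (FF be al), x. split; eauto.
  - intros [h [x [[be [al ->]] [Hx Ht]]]]. eapply sy_intro; eauto.
Qed.

Lemma iso_sy : iso_family A Sy.
Proof.
  rewrite fam_eq_sy. apply fam_iso.
  - intros h [be [al ->]]. unfold FF. apply (aut_comp A (actP be) (actN al)); [apply autP|apply autN].
  - exists (FF (gone P) (gone N)). split; eauto. intro; unfold FF; rewrite P1, N1; auto.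
  - intros h1 h2 [be1 [al1 ->]] [be2 [al2 ->]].
    destruct (FF_comp be1 al1 be2 al2) as [be [al Hfe]]. exists (FF be al); eauto.
  - intros h [be [al ->]].
    destruct (lam (ginv N al) (ginv P be)) as [b' a'] eqn:Hl.
    exists (FF b' a'). split; eauto. intro a. unfold FF.
    rewrite <- (g_iv _ _ _ _ Hl). rewrite PVl, NVl. auto.
Qed.

Lemma subpos_ext x y x' y' : set_eq x x' -> set_eq y y' -> subpos A x y -> subpos A x' y'.
Proof.
  intros Hx Hy [Hs Hp]. split.
  - intros a Ha. apply Hy, Hs, Hx, Ha.
  - intros a Ha Hn. apply Hp; [apply Hy; auto|]. intro; apply Hn, Hx; auto.
Qed.
Lemma subneg_ext x y x' y' : set_eq x x' -> set_eq y y' -> subneg A x y -> subneg A x' y'.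
Proof.
  intros Hx Hy [Hs Hp]. split.
  - intros a Ha. apply Hy, Hs, Hx, Ha.
  - intros a Ha Hn. apply Hp; [apply Hy; auto|]. intro; apply Hn, Hx; auto.
Qed.

Lemma thin : thin_game A Sy Sp Sm.
Proof.
  split; [apply g_ES|]. split; [apply iso_sy|].
  split; [apply iso_act, g_actP|]. split; [apply iso_act, g_actN|].
  split; [intros t Ht; eapply cc_r; eauto; apply rel_refl|].
  split; [intros t Ht; eapply cc_l; eauto; apply rel_refl|].
  split; [|split].
  - intros t [be [x [Hx Ht]]] [al [x' [Hx' Ht']]].
    assert (Hxx: set_eq x x').
    { intro a. rewrite <- (dom_of _ _ _ Ht a), (dom_of _ _ _ Ht' a). tauto. }
    assert (Hfix: fixes (actN al) x').
    { apply (agree A _ (actP be) g_ES (g_neg al) (g_pos be) x' Hx').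
      intros a Ha. assert (H1: t a (actP be a)) by (apply Ht; split; auto; apply Hxx; auto).
      apply Ht' in H1. destruct H1; auto. }
    exists x'. eapply rel_trans; [eauto|]. intros a b; unfold restr, id_on.
    split; intros [Ha ->]; split; auto; rewrite Hfix; auto.
  - intros t t' [b0 [x0 [Hx0 Ht]]] [[Hsub Hagr] Hsp] Ht'.
    destruct (sy_nf t' Ht') as [be [al [x' [Hx' Ht'r]]]].
    assert (Hag: forall a, x0 a -> actN al a = actP (gmul P (ginv P be) b0) a).
    { intros a Ha. assert (Hd: dom t a) by (apply (dom_of _ _ _ Ht); auto).
      assert (H1: t a (actP b0 a)) by (apply Ht; split; auto).
      apply (Hagr _ _ Hd) in H1. apply Ht'r in H1. destruct H1 as [_ H1].
      unfold FF in H1. rewrite PM, H1, PVl. auto. }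
    assert (Hfix0: fixes (actN al) x0).
    { eapply agree; [apply g_ES|apply g_neg|apply g_pos|auto|eauto]. }
    assert (Hfix: fixes (actN al) x').
    { apply (proj2 (g_neg al) x0 x'); auto.
      eapply subpos_ext; [| |exact Hsp]; [apply (dom_of _ _ _ Ht)|apply (dom_of _ _ _ Ht'r)]. }
    exists be, x'. split; auto. eapply rel_trans; [eauto|]. apply restr_ext_on.
    intros a Ha. unfold FF. rewrite Hfix; auto.
  - intros t t' [a0 [x0 [Hx0 Ht]]] [[Hsub Hagr] Hsn] Ht'.
    destruct (sy_nf t' Ht') as [be [al [x' [Hx' Ht'r]]]].
    assert (Hag: forall a, x0 a -> actP be (actN al a) = actN a0 a).
    { intros a Ha. assert (Hd: dom t a) by (apply (dom_of _ _ _ Ht); auto).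
      assert (H1: t a (actN a0 a)) by (apply Ht; split; auto).
      apply (Hagr _ _ Hd) in H1. apply Ht'r in H1. destruct H1 as [_ H1].
      unfold FF in H1. auto. }
    assert (Hy0: config A (image (actN al) x0)) by (apply aut_image_config; auto; apply autN).
    assert (Hfix0: fixes (actN (gmul N a0 (ginv N al))) (image (actN al) x0)).
    { eapply agree; [apply g_ES|apply g_neg|apply (g_pos be)|auto|].
      intros c [a [Ha ->]]. rewrite Hag, NM, NVl; auto. }
    assert (Hfixb0: fixes (actP be) (image (actN al) x0)).
    { intros c [a [Ha ->]]. rewrite Hag; auto.
      rewrite <- (Hfix0 (actN al a)) by (exists a; auto). rewrite NM, NVl. auto. }
    assert (Hsn': subneg A x0 x').
    { eapply subneg_ext; [| |exact Hsn]; [apply (dom_of _ _ _ Ht)|apply (dom_of _ _ _ Ht'r)]. }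
    assert (Hfix: fixes (actP be) (image (actN al) x')).
    { apply (proj2 (g_pos be) (image (actN al) x0)); auto.
      - apply aut_image_config; auto; apply autN.
      - destruct Hsn' as [Hs Hp]. split.
        + intros c [a [Ha ->]]. exists a; auto.
        + intros c [a [Ha ->]] Hn. rewrite (proj2 (proj2 (proj2 (autN al)))).
          apply Hp; auto. intro; apply Hn; exists a; auto. }
    exists al, x'. split; auto. eapply rel_trans; [eauto|]. apply restr_ext_on.
    intros a Ha. unfold FF. rewrite Hfix; auto. exists a; auto.
Qed.


Lemma PM_inj k a b : actP k a = actP k b -> a = b.
Proof. intro H. rewrite <- (PVl k a), <- (PVl k b), H. auto. Qed.

Lemma pol_N al a : pol A (actN al a) = pol A a.
Proof. apply (autN al). Qed.
Lemma pol_P be a : pol A (actP be a) = pol A a.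
Proof. apply (autP be). Qed.

Context {S : Type} (sg : ES S) (p : S -> E) (phi : N -> S -> S) (phib : N -> (S -> Prop) -> P).
Hypothesis Hu : is_uniform A N P actN actP lam sg p phi phib.
Hypothesis Hloc : forall x (al : N), config sg x -> fixes (actN al) (image p x) -> fixes (phi al) x.

Lemma u_st : is_strategy A sg p. Proof. apply Hu. Qed.
Lemma u_ES : is_ES sg. Proof. apply u_st. Qed.
Lemma u_pmap : es_map sg A p. Proof. apply u_st. Qed.
Lemma u_phimap al : es_map sg sg (phi al). Proof. apply Hu. Qed.
Lemma W al x s : config sg x -> x s -> actP (phib al x) (p (phi al s)) = actN al (p s).
Proof. intros. apply (proj2 (proj1 (proj2 Hu) al)); auto. Qed.
Lemma Wi al x s : config sg x -> x s -> p (phi al s) = actP (ginv P (phib al x)) (actN al (p s)).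
Proof. intros. rewrite <- (W al x s); auto. rewrite PVl; auto. Qed.
Lemma p_inj x a b : config sg x -> x a -> x b -> p a = p b -> a = b.
Proof. intros. eapply (proj2 (proj2 u_pmap)); eauto. Qed.
Lemma pol_p s : pol A (p s) = pol sg s.
Proof. apply u_pmap. Qed.
Lemma img_p x : config sg x -> config A (image p x).
Proof. apply u_pmap. Qed.
Lemma img_phi al x : config sg x -> config sg (image (phi al) x).
Proof. apply u_phimap. Qed.

Lemma phi_e_fix x : config sg x -> fixes (phi (gone N)) x.
Proof.
  intros Hx s Hs. destruct (proj1 (proj2 (proj2 Hu)) x Hx) as [Him Hb].
  assert (H1: x (phi (gone N) s)) by (apply Him; exists s; auto).
  apply (p_inj x); auto. pose proof (W (gone N) x s Hx Hs) as HW.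
  rewrite Hb, P1, N1 in HW. auto.
Qed.

Lemma core x al al' s : config sg x -> x s ->
  phi (gmul N al' al) s = phi (snd (lam al' (phib al x))) (phi al s).
Proof.
  intros Hx Hs. pose proof (proj2 (proj2 (proj2 Hu)) al al' x Hx) as Hc. cbv zeta in Hc.
  destruct (lam al' (phib al x)) as [ga be] eqn:Hl. simpl in *. destruct Hc as [Him Hb].
  assert (Hy: config sg (image (phi al) x)) by (apply img_phi; auto).
  assert (Hys: image (phi al) x (phi al s)) by (exists s; auto).
  apply (p_inj (image (phi (gmul N al' al)) x)).
  - apply img_phi; auto.
  - exists s; auto.
  - apply Him. exists (phi al s); auto.
  - apply (PM_inj (phib (gmul N al' al) x)). rewrite W; auto.
    rewrite Hb, PM, W; auto. rewrite (Wi al x s Hx Hs).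
    rewrite NM. rewrite <- (PVr (phib al x) (actN al (p s))) at 1.
    rewrite (g_iv _ _ _ _ Hl). auto.
Qed.

Lemma phi_comp x al1 al2 : config sg x ->
  exists al, forall s, x s -> phi al s = phi al2 (phi al1 s).
Proof.
  intros Hx. destruct (lam al2 (ginv P (phib al1 x))) as [b1 al'] eqn:H1.
  destruct (lam al' (phib al1 x)) as [b2 a2] eqn:H2.
  pose proof (g_iii _ _ _ _ _ _ _ H1 H2) as H3. rewrite gmulVl, g_i2 in H3.
  inversion H3; subst a2.
  exists (gmul N al' al1). intros s Hs. rewrite (core x); auto. rewrite H2. auto.
Qed.

Lemma phi_inv x al : config sg x ->
  exists al', forall s, x s -> phi al' (phi al s) = s.
Proof.
  intros Hx. exists (snd (lam (ginv N al) (phib al x))). intros s Hs.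
  rewrite <- (core x); auto. rewrite gmulVl. apply (phi_e_fix x); auto.
Qed.

Lemma iso_phi : iso_family sg (S_phi sg N phi).
Proof.
  split; [|split; [|split; [|split; [|split]]]].
  - intros t [al [x [Hx Ht]]]. exists x, (image (phi al) x). split; auto.
    split; [apply img_phi; auto|]. split.
    + split; [|split; [|split]].
      * intros a b b' H1 H2. apply Ht in H1. apply Ht in H2. destruct H1, H2; congruence.
      * intros a a' b H1 H2. apply Ht in H1. apply Ht in H2.
        destruct H1 as [Ha E1], H2 as [Ha' E2].
        apply (proj2 (proj2 (u_phimap al)) x Hx); auto. congruence.
      * apply dom_of with (phi al); auto.
      * apply cod_of; auto.
    + intros a b Hab. apply Ht in Hab. destruct Hab as [_ ->].
      symmetry. apply (proj1 (u_phimap al)).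
  - intros x Hx. exists (gone N), x. split; auto.
    intros a b; unfold id_on, restr. split; intros [Ha ->]; split; auto; rewrite (phi_e_fix x Hx a Ha); auto.
  - intros t1 t2 [al1 [x1 [Hx1 Ht1]]] [al2 [x2 [Hx2 Ht2]]] Hcd.
    destruct (phi_comp x1 al1 al2 Hx1) as [al Heq]. exists al, x1. split; auto.
    intros a c; unfold bcomp, restr; split.
    + intros [b [Hb1 Hb2]]. apply Ht1 in Hb1. apply Ht2 in Hb2.
      destruct Hb1 as [? ->], Hb2 as [? ->]. split; auto. rewrite Heq; auto.
    + intros [Ha ->]. rewrite Heq; auto. exists (phi al1 a). split; [apply Ht1; split; auto|].
      apply Ht2. split; [|auto].
      assert (Hc: cod t1 (phi al1 a)) by (exists a; apply Ht1; split; auto).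
      apply Hcd in Hc. apply (dom_of _ _ _ Ht2) in Hc. auto.
  - intros t [al [x [Hx Ht]]]. destruct (phi_inv x al Hx) as [al' Hi].
    exists al', (image (phi al) x). split; [apply img_phi; auto|].
    intros a b; unfold binv, restr, image. rewrite (Ht b a). unfold restr. split.
    + intros [Hb ->]. split; [exists b; auto| rewrite Hi; auto].
    + intros [[c [Hc ->]] ->]. rewrite Hi; auto.
  - intros t x0 [al [x [Hx Ht]]] Hx0 Hsub. exists al, x0. split; auto.
    intros a b; unfold brestrict, restr. rewrite (Ht a b). unfold restr. split; [tauto|].
    intros [Ha ->]. split; auto. split; auto. apply (dom_of _ _ _ Ht). auto.
  - intros t x' [al [x [Hx Ht]]] Hx' Hsub. exists (restr (phi al) x'). split; [|split].
    + exists al, x'. split; auto. intros a b; tauto.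
    + split.
      * intros a Ha. apply (dom_restr _ x'). auto.
      * intros a b Ha. pose proof (Hsub a Ha) as Ha'. apply (dom_of _ _ _ Ht) in Ha.
        rewrite (Ht a b). unfold restr. tauto.
    + apply dom_restr.
Qed.

Lemma subpos_extg {T} (B: ES T) x y x' y' : set_eq x x' -> set_eq y y' -> subpos B x y -> subpos B x' y'.
Proof.
  intros Hx Hy [Hs Hp]. split.
  - intros a Ha. apply Hy, Hs, Hx, Ha.
  - intros a Ha Hn. apply Hp; [apply Hy; auto|]. intro; apply Hn, Hx; auto.
Qed.
Lemma subneg_extg {T} (B: ES T) x y x' y' : set_eq x x' -> set_eq y y' -> subneg B x y -> subneg B x' y'.
Proof.
  intros Hx Hy [Hs Hp]. split.
  - intros a Ha. apply Hy, Hs, Hx, Ha.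
  - intros a Ha Hn. apply Hp; [apply Hy; auto|]. intro; apply Hn, Hx; auto.
Qed.

Lemma dom_id {T} (x : T -> Prop) : set_eq (dom (id_on x)) x.
Proof. intro a; unfold dom, id_on; split; [intros [b [? ?]]; auto|intros; exists a; auto]. Qed.

Lemma sim : sim_strategy A Sy sg (S_phi sg N phi) p.
Proof.
  split; [apply u_ES|]. split; [apply iso_phi|].
  split; [split; [apply u_pmap|]|]. 
  { intros t [al [x [Hx Ht]]].
    apply (sy_intro _ (ginv P (phib al x)) al (image p x)); [apply img_p; auto|].
    intros c d; unfold push, restr, FF. split.
    - intros [a [b [Hab [-> ->]]]]. apply Ht in Hab. destruct Hab as [Ha ->].
      split; [exists a; auto|]. apply Wi; auto.
    - intros [[a [Ha ->]] ->]. exists a, (phi al a). split; [apply Ht; split; auto|].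
      split; auto. symmetry; apply Wi; auto. }
  split; [apply u_st|]. split.
  - intros x t Hx [[Hsub Hagr] Hsp] [al [x' [Hx' Ht]]].
    assert (Hxx: forall a, x a -> x' a).
    { intros a Ha. apply (dom_of _ _ _ Ht). apply Hsub. apply dom_id; auto. }
    assert (Hfx: forall a, x a -> phi al a = a).
    { intros a Ha. assert (H1: t a (phi al a)) by (apply Ht; split; auto).
      apply Hagr in H1; [|apply dom_id; auto]. destruct H1; auto. }
    assert (Hfa: fixes (actN al) (image p x)).
    { apply (agree A _ (actP (phib al x')) g_ES (g_neg al) (g_pos _)); [apply img_p; auto|].
      intros c [a [Ha ->]]. rewrite <- (W al x' a); auto. rewrite Hfx; auto. }
    assert (Hfa': fixes (actN al) (image p x')).
    { apply (proj2 (g_neg al) (image p x)); auto; try apply img_p; auto.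
      assert (Hsp': subpos sg x x').
      { eapply subpos_extg in Hsp; [exact Hsp|apply dom_id|apply (dom_of _ _ _ Ht)]. }
      split.
      - intros c [a [Ha ->]]. exists a; auto.
      - intros c [a [Ha ->]] Hn. rewrite pol_p. apply (proj2 Hsp'); auto.
        intro; apply Hn; exists a; auto. }
    pose proof (Hloc x' al Hx' Hfa') as Hf.
    exists x'. eapply rel_trans; [eauto|]. intros a b; unfold restr, id_on.
    split; intros [Ha ->]; split; auto; rewrite Hf; auto.
  - intros x y z t Hx Hy Hz Hxy Hxz Ht Hdt Hct Hsb.
    destruct (sy_nf t Ht) as [be [al [w [Hw Htr]]]].
    assert (Htr': forall c d, t c d <-> image p y c /\ d = FF be al c).
    { intros c d. rewrite (Htr c d). unfold restr. rewrite <- (Hdt c), (dom_of _ _ _ Htr c). tauto. }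
    assert (Hpx: forall c, image p x c -> actP be (actN al c) = c).
    { intros c Hc. destruct Hsb as [_ Ha].
      assert (H1: t c c) by (apply Ha; [apply dom_id; auto| split; auto]).
      apply Htr' in H1. destruct H1 as [_ H1]. unfold FF in H1. auto. }
    assert (Hxy': forall s, x s -> y s) by apply Hxy.
    assert (Hfa: fixes (actN al) (image p x)).
    { apply (agree A _ (actP (ginv P be)) g_ES (g_neg al) (g_pos _)); [apply img_p; auto|].
      intros c Hc. rewrite <- (Hpx c Hc) at 2. rewrite PVl. auto. }
    assert (Hsn: subneg A (image p x) (image (actN al) (image p y))).
    { split.
      - intros c Hc. exists c. split; [|rewrite Hfa; auto].
        destruct Hc as [s [Hs ->]]. exists s; auto.
      - intros d [c' [[s [Hs ->]] ->]] Hn.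
        rewrite pol_N, pol_p. apply (proj2 Hxy); auto.
        intro Hxs. apply Hn. rewrite Hfa; exists s; auto. }
    assert (Hpy: config A (image (actN al) (image p y))).
    { apply aut_image_config; [apply autN|apply img_p; auto]. }
    pose proof (Hloc x al Hx Hfa) as Hfx.
    assert (HBx: fixes (actP (ginv P (phib al y))) (image p x)).
    { intros c [s [Hs ->]]. rewrite <- (PVl (phib al y) (p s)) at 2.
      f_equal. rewrite <- (Hfx s Hs) at 2. rewrite W; auto. rewrite Hfa; auto. exists s; auto. }
    pose proof (proj2 (g_pos (ginv P (phib al y))) _ _ (img_p x Hx) Hpy HBx Hsn) as HBy.
    assert (HBy': forall s, y s -> actP be (actN al (p s)) = actN al (p s)).
    { assert (Hbx: fixes (actP be) (image p x)).
      { intros c Hc. rewrite <- (Hpx c Hc) at 2. rewrite Hfa; auto. }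
      pose proof (proj2 (g_pos be) _ _ (img_p x Hx) Hpy Hbx Hsn) as Hb.
      intros s Hs. apply Hb. exists (p s); split; auto. exists s; auto. }
    assert (Hps: forall s, y s -> p (phi al s) = actN al (p s)).
    { intros s Hs. rewrite (Wi al y s); auto. apply HBy. exists (p s); split; auto. exists s; auto. }
    assert (Hcz: set_eq (image (phi al) y) z).
    { destruct (proj2 (proj2 u_st) x Hx) as [R _].
      assert (Hsnz: subneg A (image p x) (image p z)).
      { split.
        - intros c [s [Hs ->]]. exists s; split; auto. apply Hxz; auto.
        - intros c [s [Hs ->]] Hn. rewrite pol_p. apply (proj2 Hxz); auto.
          intro; apply Hn; exists s; auto. }
      destruct (R _ (img_p z Hz) Hsnz) as [y0 [Hy0 [Hxy0 [Hpy0 Huniq]]]].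
      assert (Hz0: set_eq z y0).
      { apply Huniq; auto. apply Hxz. intro; tauto. }
      assert (Hc0: set_eq (image (phi al) y) y0).
      { apply Huniq.
        - apply img_phi; auto.
        - intros s Hs. exists s. split; auto. rewrite Hfx; auto.
        - intros d. split.
          + intros [u [[s [Hs ->]] ->]]. rewrite Hps; auto.
            apply Hct. exists (p s). apply Htr'. split; [exists s; auto|].
            unfold FF. rewrite HBy'; auto.
          + intros Hd. apply Hct in Hd. destruct Hd as [c Hc]. apply Htr' in Hc.
            destruct Hc as [[s [Hs ->]] ->]. exists (phi al s). split; [exists s; auto|].
            rewrite Hps; auto. unfold FF. rewrite HBy'; auto. }
      intro u. rewrite (Hc0 u), (Hz0 u). tauto. }
    exists (restr (phi al) y). split; [exists al, y; split; auto; apply rel_refl|].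
    split; [apply dom_restr|]. split.
    { intro u. rewrite (cod_restr _ _ u). apply Hcz. }
    split.
    + split.
      * intros a Ha. apply dom_restr. apply (dom_id x) in Ha. auto.
      * intros a b Ha. apply (dom_id x) in Ha. unfold restr, id_on.
        rewrite (Hfx a Ha). split; intros [_ ->]; auto.
    + intros c d. unfold push, restr. rewrite Htr'. split.
      * intros [a [b [[Ha ->] [-> ->]]]]. split; [exists a; auto|].
        unfold FF. rewrite HBy', Hps; auto.
      * intros [[s [Hs ->]] ->]. exists s, (phi al s). split; auto. split; auto.
        unfold FF. rewrite HBy', Hps; auto.
Qed.
End Game.

Theorem proposition6p5 {E S : Type} (A : ES E) (N P : Group)
  (actN : N -> E -> E) (actP : P -> E -> E) (lam : N -> P -> P * N)
  (sg : ES S) (p : S -> E) (phi : N -> S -> S) (phib : N -> (S -> Prop) -> P) :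
  is_game A N P actN actP lam ->
  is_uniform A N P actN actP lam sg p phi phib ->
  (forall x (al : N), config sg x -> fixes (actN al) (image p x) -> fixes (phi al) x) ->
  let Sm := S_act A N actN in
  let Sp := S_act A P actP in
  let Sy := comp_closure Sm Sp in
  thin_game A Sy Sp Sm /\ sim_strategy A Sy sg (S_phi sg N phi) p.
Proof.
  intros Hg Hu Hloc Sm Sp Sy. split.
  - apply (thin A N P actN actP lam Hg).
  - apply (sim A N P actN actP lam Hg sg p phi phib Hu Hloc).
Qed.
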